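(* Let $\mathcal{X}=\{(\mathbf{x}^{(1,m)},\ldots,\mathbf{x}^{(N,m)})\in(\mathbb{R}^D)^N\}_{m=1}^M$ and let $\bar{\mathcal{K}}\subseteq[N]$ have even size. Then there exists a complete undirected weighted graph with vertex set $\bar{\mathcal{K}}$ and edge weights $w$ such that for every $\mathcal{K}\subset\bar{\mathcal{K}}$, the weight of the cut induced by $\mathcal{K}$, namely $\sum_{n\in\mathcal{K},\,n'\in\bar{\mathcal{K}}\setminus\mathcal{K}}w(\{n,n'\})$, equals $\frac12\big[\mathrm{SE}(\mathcal{X};\mathcal{K})+\mathrm{SE}(\mathcal{X};\bar{\mathcal{K}}\setminus\mathcal{K})\big]$ up to an additive constant independent of $\mathcal{K}$. In particular, the problem $\min_{\mathcal{K}\subset\bar{\mathcal{K}},\,|\mathcal{K}|=|\bar{\mathcal{K}}|/2}\frac12\big[\mathrm{SE}(\mathcal{X};\mathcal{K})+\mathrm{SE}(\mathcal{X};\bar{\mathcal{K}}\setminus\mathcal{K})\big]$ is a minimum balanced cut problem on this complete graph with $|\bar{\mathcal{K}}|$ vertices.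
   Context: $[N]=\{1,\ldots,N\}$. For the instance set $\mathcal{X}$, let $\mu^{(n)}=\frac1M\sum_m\mathbf{x}^{(n,m)}$, $\Sigma^{(n)}=\frac1M\sum_m(\mathbf{x}^{(n,m)}-\mu^{(n)})\otimes(\mathbf{x}^{(n,m)}-\mu^{(n)})$ and $\Sigma^{(n,n')}=\frac1M\sum_m(\mathbf{x}^{(n,m)}-\mu^{(n)})\otimes(\mathbf{x}^{(n',m)}-\mu^{(n')})$. The multivariate Pearson correlation of features $n,n'$ is $p_{n,n'}:=\mathrm{tr}(\Sigma^{(n,n')})/\mathrm{tr}\big((\Sigma^{(n)}\Sigma^{(n')})^{1/2}\big)$. For $\mathcal{K}\subseteq[N]$ the surrogate entanglement is $\mathrm{SE}(\mathcal{X};\mathcal{K}):=\sum_{n\in\mathcal{K},\,n'\in[N]\setminus\mathcal{K}}p_{n,n'}$. *)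

(* Defs.v *)
From HB Require Import structures.
From mathcomp Require Import all_boot all_order all_algebra.
From mathcomp Require Import boolp classical_sets reals.
Set Implicit Arguments. Unset Strict Implicit. Unset Printing Implicit Defensive.
Import Order.TTheory GRing.Theory Num.Theory.
Local Open Scope ring_scope.

Section SE.
Variable R : realType.

Definition is_nonneg_sqrt (D : nat) (A S : 'M[R]_D) : Prop :=
  S *m S = A /\
  exists c : 'I_D -> R, (forall i, 0 <= c i) /\
    char_poly S = \prod_(i < D) ('X - (c i)%:P).

(* the (principal) matrix square root A^{1/2}; for A = Sigma Sigma' with
   Sigma, Sigma' PSD such a root exists and its trace is uniquely determined
   (sum of the square roots of the eigenvalues of A). *)
Definition msqrt (D : nat) (A : 'M[R]_D) : 'M[R]_D :=
  xget 0 [set S | is_nonneg_sqrt A S].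

(* dataset: M instances, each with N features in R^D (column vectors) *)
Definition feat_mean (D N M : nat) (X : 'I_M -> 'I_N -> 'cV[R]_D) (n : 'I_N)
  : 'cV[R]_D := (M%:R)^-1 *: \sum_(m < M) X m n.

Definition cross_cov (D N M : nat) (X : 'I_M -> 'I_N -> 'cV[R]_D)
  (n n' : 'I_N) : 'M[R]_D :=
  (M%:R)^-1 *: \sum_(m < M)
     ((X m n - feat_mean X n) *m (X m n' - feat_mean X n')^T).

Definition cov (D N M : nat) (X : 'I_M -> 'I_N -> 'cV[R]_D) (n : 'I_N)
  : 'M[R]_D := cross_cov X n n.

Definition pearson (D N M : nat) (X : 'I_M -> 'I_N -> 'cV[R]_D)
  (n n' : 'I_N) : R :=
  \tr (cross_cov X n n') / \tr (msqrt (cov X n *m cov X n')).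

Definition SE (D N M : nat) (X : 'I_M -> 'I_N -> 'cV[R]_D)
  (K : {set 'I_N}) : R :=
  \sum_(n in K) \sum_(n' in ~: K) pearson X n n'.

Definition cut_weight (N : nat) (w : 'I_N -> 'I_N -> R)
  (Kbar K : {set 'I_N}) : R :=
  \sum_(n in K) \sum_(n' in Kbar :\: K) w n n'.

Definition SE_obj (D N M : nat) (X : 'I_M -> 'I_N -> 'cV[R]_D)
  (Kbar K : {set 'I_N}) : R :=
  (SE X K + SE X (Kbar :\: K)) / 2.

End SE.

(* Main.v *)
Require Import Defs.
From HB Require Import structures.
From mathcomp Require Import all_boot all_order all_algebra.
From mathcomp Require Import boolp classical_sets reals.
From mathcomp Require Import ring.
Import Order.TTheory GRing.Theory Num.Theory.
Local Open Scope ring_scope.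

Theorem proposition2 (R : realType) (D N M : nat)
  (X : 'I_M -> 'I_N -> 'cV[R]_D) (Kbar : {set 'I_N}) :
  ~~ odd #|Kbar| ->
  exists (w : 'I_N -> 'I_N -> R) (c : R),
    (forall n n', w n n' = w n' n) /\
    (forall K : {set 'I_N}, K \subset Kbar ->
       cut_weight w Kbar K = SE_obj X Kbar K + c) /\
    (forall K K' : {set 'I_N}, K \subset Kbar -> K' \subset Kbar ->
       #|K| = (#|Kbar| %/ 2)%N -> #|K'| = (#|Kbar| %/ 2)%N ->
       (cut_weight w Kbar K <= cut_weight w Kbar K')
         = (SE_obj X Kbar K <= SE_obj X Kbar K')).
Proof.
move=> _.
set p := pearson X.
pose P (A B : {set 'I_N}) := \sum_(n in A) \sum_(n' in B) p n n'.
pose w := fun n n' => (p n n' + p n' n) / 2.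
pose c := - (P Kbar (~: Kbar)) / 2.
have Hc : forall K : {set 'I_N}, K \subset Kbar -> cut_weight w Kbar K = SE_obj X Kbar K + c.
  move=> K sK.
  set B := Kbar :\: K.
  have dKB : [disjoint K & B].
    by rewrite -setI_eq0 /B; apply/eqP/setP => x; rewrite !inE; case: (x \in K); rewrite ?andbF.
  have eKbar : Kbar = K :|: B.
    apply/setP => x; have := fintype.subsetP sK x; rewrite /B !inE;
    by case: (x \in K) => [/(_ isT) ->|_] /=; case: (x \in Kbar).
  have eCK : ~: K = B :|: ~: Kbar.
    apply/setP => x; have := fintype.subsetP sK x; rewrite /B !inE;
    by case: (x \in K) => [/(_ isT) ->|_] /=; case: (x \in Kbar).
  have eCB : ~: B = K :|: ~: Kbar.
    apply/setP => x; have := fintype.subsetP sK x; rewrite /B !inE;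
    by case: (x \in K) => [/(_ isT) ->|_] /=; case: (x \in Kbar).
  have dB : [disjoint B & ~: Kbar].
    by rewrite -setI_eq0 /B; apply/eqP/setP => x; rewrite !inE; case: (x \in Kbar); rewrite ?andbF.
  have dK : [disjoint K & ~: Kbar].
    by rewrite -setI_eq0; apply/eqP/setP => x; rewrite !inE; case: (boolP (x \in K)) => // /(fintype.subsetP sK) ->.
  have SEK : SE X K = P K B + P K (~: Kbar).
    rewrite /SE /P -big_split /=; apply: eq_bigr => n _.
    by rewrite eCK -(bigU _ _ _ dB); apply: eq_bigl => i; rewrite !inE.
  have SEB : SE X B = P B K + P B (~: Kbar).
    rewrite /SE /P -big_split /=; apply: eq_bigr => n _.
    by rewrite eCB -(bigU _ _ _ dK); apply: eq_bigl => i; rewrite !inE.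
  have PC : P Kbar (~: Kbar) = P K (~: Kbar) + P B (~: Kbar).
    by rewrite /P {1}eKbar -(bigU _ _ _ dKB); apply: eq_bigl => i; rewrite !inE.
  have CW : cut_weight w Kbar K = (P K B + P B K) / 2.
    have ex : P B K = \sum_(n in K) \sum_(n' in B) p n' n by rewrite /P exchange_big.
    rewrite ex /P /cut_weight /w -big_split /= mulr_suml; apply: eq_bigr => n _.
    by rewrite -big_split /= mulr_suml.
  rewrite CW /SE_obj -/B SEK SEB /c PC.
  rewrite /p. field; first by [].
exists w; exists c; split; first by move=> n n'; rewrite /w addrC.
split; first exact: Hc.
move=> K K' sK sK' _ _; by rewrite !Hc // lerD2r.
Qed.
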